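(* Let $n\ge3$ and let $I\subseteq(0,+\infty)$ be a bounded interval. Then for every $V\in H^1(I)$, $$\sup_{s\in I}s^{\frac n2-1}|V(s)|\le C\Big[\Big(\int_I s^{n-1}|V'(s)|^2ds\Big)^{1/2}+|I|^{-1}\Big(\int_I s^{n-1}|V(s)|^2ds\Big)^{1/2}\Big],$$ with a constant $C$ independent of $I$ and $V$.
   Context: $|I|$ denotes the length of $I$. *)

(* Defs.v *)
From HB Require Import structures.
From mathcomp Require Import all_boot all_order all_algebra.
From mathcomp Require Import all_classical all_reals all_analysis.
Set Implicit Arguments. Unset Strict Implicit. Unset Printing Implicit Defensive.
Import Order.TTheory GRing.Theory Num.Theory.
Import numFieldNormedType.Exports.
Local Open Scope classical_set_scope.
Local Open Scope ring_scope.

(* H1_on D V g : V belongs to the Sobolev space H^1(D) on the (1-d) interval D,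
   V being its (absolutely) continuous representative and g its weak derivative V':
   V, g are in L^2(D) and V y - V x = \int_x^y g for x <= y in D. *)
Definition H1_on (R : realType) (D : set R) (V g : R -> R) : Prop :=
  [/\ measurable_fun D V,
      (lebesgue_measure).-integrable D (fun s => (V s ^+ 2)%:E),
      measurable_fun D g,
      (lebesgue_measure).-integrable D (fun s => (g s ^+ 2)%:E) &
      forall x y, D x -> D y -> x <= y ->
        V y - V x = \int[lebesgue_measure]_(t in `[x, y]) g t].

(* Main.v *)
Require Import Defs.
From HB Require Import structures.
From mathcomp Require Import all_boot all_order all_algebra.
From mathcomp Require Import all_classical all_reals all_analysis.
Import Order.TTheory GRing.Theory Num.Theory.
Import numFieldNormedType.Exports.
Local Open Scope classical_set_scope.
Local Open Scope ring_scope.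
From mathcomp Require Import ring lra zify.

Section S.
Variable R : realType.

Lemma itv_conv (ba bb : bool) (a b m M x : R) :
  m \in Interval (BSide ba a) (BSide bb b) ->
  M \in Interval (BSide ba a) (BSide bb b) -> m <= x -> x <= M ->
  x \in Interval (BSide ba a) (BSide bb b).
Proof.
rewrite !in_itv /= => /andP[h1 _] /andP[_ h2] h3 h4; apply/andP; split.
  by case: ba h1 => /= h1; [exact: le_trans h3|exact: lt_le_trans h3].
by case: bb h2 => /= h2; [exact: le_lt_trans h2|exact: le_trans h2].
Qed.

Lemma itv_bnds (ba bb : bool) (a b x : R) :
  x \in Interval (BSide ba a) (BSide bb b) -> a <= x /\ x <= b.
Proof.
rewrite in_itv /= => /andP[h1 h2]; split.
  by case: ba h1 => /= h1 //; exact: ltW.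
by case: bb h2 => /= h2 //; exact: ltW.
Qed.

Lemma itv_open (ba bb : bool) (a b x : R) :
  a < x -> x < b -> x \in Interval (BSide ba a) (BSide bb b).
Proof.
move=> h1 h2; rewrite in_itv /=; apply/andP; split.
  by case: ba => //=; exact: ltW.
by case: bb => //=; exact: ltW.
Qed.

Lemma fine_abs_le (x : \bar R) (E : R) : (`|x| <= E%:E)%E -> `|fine x| <= E.
Proof. by case: x => [r| |] //=; rewrite lee_fin. Qed.

Lemma sq_le (x k y : R) : 0 <= x -> 0 <= k -> 0 <= y -> x ^+ 2 <= k ^+ 2 * y ->
  x <= k * Num.sqrt y.
Proof.
move=> x0 k0 y0 h.
have -> : x = Num.sqrt (x ^+ 2) by rewrite sqrtr_sqr ger0_norm.
have -> : k = Num.sqrt (k ^+ 2) by rewrite sqrtr_sqr ger0_norm.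
rewrite -sqrtrM ?sqr_ge0 //.
by rewrite ler_sqrt // mulr_ge0 // sqr_ge0.
Qed.

Lemma amgm_sq (D A K : R) : 0 <= D -> 0 <= A -> 0 < K ->
  (forall e, 0 < e -> D <= e / 2 * A + (2 * e)^-1 * K) -> D ^+ 2 <= A * K.
Proof.
move=> D0 A0 K0 h.
have [->|Dn0] := eqVneq D 0; first by rewrite expr0n /= mulr_ge0 // ltW.
have Dp : 0 < D by rewrite lt_def Dn0.
have := h (K / D) (divr_gt0 K0 Dp).
have -> : K / D / 2 * A + (2 * (K / D))^-1 * K = (K * A / D + D) / 2.
  by field; rewrite Dn0 gt_eqF.
have hq : K * A / D * D = A * K by field.
move: hq; set q := K * A / D => hq hh.
rewrite expr2 -hq. nra.
Qed.

Lemma pw_bound (n : nat) (hn : (3 <= n)%N) (e m t y : R) : 0 < e -> 0 < m -> m <= t ->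
  `|y| <= e / 2 * (t ^+ (n - 1) * y ^+ 2) + (2 * e)^-1 * (m ^+ (n - 3))^-1 * t ^- 2.
Proof.
move=> e0 m0 mt.
have t0 : 0 < t by exact: lt_le_trans mt.
have W0 : 0 < t ^+ (n - 1) by exact: exprn_gt0.
have hW : t ^+ (n - 1) = t ^+ (n - 3) * t ^+ 2.
  by rewrite -exprD; congr (_ ^+ _); lia.
have mn0 : 0 < m ^+ (n - 3) by exact: exprn_gt0.
have hmW : m ^+ (n - 3) * t ^+ 2 <= t ^+ (n - 1).
  rewrite hW ler_pM2r ?exprn_gt0 //.
  by apply: lerXn2r => //; rewrite nnegrE ltW.
apply: (@le_trans _ _ (e / 2 * (t ^+ (n - 1) * y ^+ 2) + (2 * e * t ^+ (n - 1))^-1)).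
  rewrite -subr_ge0.
  have -> : e / 2 * (t ^+ (n - 1) * y ^+ 2) + (2 * e * t ^+ (n - 1))^-1 - `|y| =
      (e * t ^+ (n - 1) * `|y| - 1) ^+ 2 / (2 * e * t ^+ (n - 1)).
    rewrite -[y ^+ 2](@real_normK _ y) ?num_real //.
    field; rewrite ?gt_eqF //.
  by rewrite divr_ge0 ?sqr_ge0 // ltW // mulr_gt0 // mulr_gt0.
rewrite lerD2l -mulrA -!invfM.
rewrite lef_pV2 ?posrE ?mulr_gt0 ?exprn_gt0 //.
rewrite -!mulrA ler_pM2l // ler_pM2l //.
Qed.
Lemma cont_inv2 (x : R) : x != 0 -> {for x, continuous (fun y : R => y ^- 2)}.
Proof.
move=> x0; apply: (@continuousV _ _ (fun y : R => y ^+ 2)).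
  by rewrite expf_neq0.
exact: exprn_continuous.
Qed.

Lemma cont_Ninv (x : R) : x != 0 -> {for x, continuous (fun y : R => - y^-1)}.
Proof.
move=> x0; apply: continuousN; exact: inv_continuous.
Qed.

Lemma isd_Ninv (x : R) : x != 0 -> is_derive x 1 (fun y : R => - y^-1) (x ^- 2).
Proof.
move=> x0.
have h := @is_deriveV R id x 1 1 x0 (is_derive_id _ _).
have := is_deriveN h.
by rewrite /= scaler1 opprK.
Qed.

Lemma int_inv2 (m M : R) : 0 < m -> m < M ->
  (\int[lebesgue_measure]_(x in `[m, M]) (x ^- 2)%:E = (m^-1 - M^-1)%:E)%E.
Proof.
move=> m0 mM.
have nz x : m <= x -> x != 0 by move=> h; rewrite gt_eqF // (lt_le_trans m0 h).
rewrite (@continuous_FTC2 _ _ (fun y : R => - y^-1)) //.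
- by rewrite -EFinD opprK addrC.
- apply/continuous_within_itvP => //; split.
  + move=> x; rewrite in_itv /= => /andP[h _]; exact/cont_inv2/nz/ltW.
  + apply: cvg_at_right_filter; exact/cont_inv2/nz.
  + apply: cvg_at_left_filter; apply/cont_inv2/nz/ltW => //.
- split.
  + move=> x; rewrite in_itv /= => /andP[h _].
    have hd := isd_Ninv x (nz x (ltW h)); exact: ex_derive.
  + apply: cvg_at_right_filter; exact/cont_Ninv/nz.
  + apply: cvg_at_left_filter; apply/cont_Ninv/nz/ltW => //.
- move=> x; rewrite in_itv /= => /andP[h _].
  rewrite derive1E; apply: derive_val; exact: isd_Ninv x (nz x (ltW h)).
Qed.

Lemma cont_within_inv2 (m M : R) : 0 < m -> m < M ->
  {within `[m, M], continuous (fun y : R => y ^- 2)}.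
Proof.
move=> m0 mM.
have nz x : m <= x -> x != 0 by move=> h; rewrite gt_eqF // (lt_le_trans m0 h).
apply/continuous_within_itvP => //; split.
+ move=> x; rewrite in_itv /= => /andP[h _]; exact/cont_inv2/nz/ltW.
+ apply: cvg_at_right_filter; exact/cont_inv2/nz.
+ apply: cvg_at_left_filter; apply/cont_inv2/nz/ltW => //.
Qed.

Local Notation mEF := measurable_realfun.measurable_EFinP.

Lemma Dint (n : nat) (hn : (3 <= n)%N) (I : set R) (mI : measurable I)
  (hI0 : forall x, I x -> 0 <= x) (g : R -> R) (mg : measurable_fun I g) (IA : R)
  (hIA : (\int[lebesgue_measure]_(x in I) (x ^+ (n - 1) * g x ^+ 2)%:E <= IA%:E)%E)
  (m M e : R) : 0 < m -> m < M -> `[m, M] `<=` I -> 0 < e ->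
  (\int[lebesgue_measure]_(x in `[m, M]) (`|g x|)%:E <=
     (e / 2 * IA + (2 * e)^-1 * (m ^+ (n - 3))^-1 * (m^-1 - M^-1))%:E)%E.
Proof.
move=> m0 mM sub e0.
have mJ : measurable `[m, M] by exact: measurable_itv.
have mgJ : measurable_fun `[m, M] g by exact: measurable_funS mI sub mg.
pose k := (2 * e)^-1 * (m ^+ (n - 3))^-1.
have k0 : 0 <= k by rewrite /k mulr_ge0 // invr_ge0 ?mulr_ge0 // ?exprn_ge0 // ltW.
have e20 : 0 <= e / 2 by rewrite divr_ge0 // ltW.
have mf1I : measurable_fun I (fun x => x ^+ (n - 1) * g x ^+ 2).
  apply: measurable_realfun.measurable_funM.
    exact: measurable_realfun.exprn_measurable.
  exact: measurable_realfun.measurable_funX.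
have mf1 : measurable_fun `[m, M] (fun x => x ^+ (n - 1) * g x ^+ 2).
  exact: measurable_funS mI sub mf1I.
have mf2 : measurable_fun `[m, M] (fun x : R => x ^- 2).
  apply: measurable_realfun.subspace_continuous_measurable_fun => //.
  exact: cont_within_inv2.
have J0 x : [set` `[m, M]] x -> 0 < x.
  by rewrite /= in_itv /= => /andP[h _]; exact: lt_le_trans h.
have h1 : (\int[lebesgue_measure]_(x in `[m, M]) (`|g x|)%:E <=
   \int[lebesgue_measure]_(x in `[m, M]) ((e / 2)%:E * (x ^+ (n - 1) * g x ^+ 2)%:E
        + k%:E * (x ^- 2)%:E))%E.
  apply: ge0_le_integral => //.
  - apply/mEF; apply: (measurableT_comp _ mgJ); exact: measurable_realfun.normr_measurable.
  - rewrite (_ : (fun x => _) = (fun x => ((e/2) * (x^+(n-1)*g x^+2) + k * x^-2)%:E)); last first.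
      by apply/funext => x; rewrite EFinD !EFinM.
    apply/mEF/measurable_realfun.measurable_funD.
      exact: measurable_realfun.measurable_funM.
    exact: measurable_realfun.measurable_funM.
  - move=> x Jx; rewrite -!EFinM -EFinD lee_fin /k.
    apply: pw_bound => //.
    by move: Jx; rewrite /= in_itv /= => /andP[].
apply: (le_trans h1).
have f10 x : [set` `[m, M]] x -> (0 <= (x ^+ (n - 1) * g x ^+ 2)%:E)%E.
  by move=> /J0 x0; rewrite lee_fin mulr_ge0 ?sqr_ge0 // exprn_ge0 // ltW.
have f20 x : [set` `[m, M]] x -> (0 <= (x ^- 2)%:E)%E.
  by move=> /J0 x0; rewrite lee_fin invr_ge0 exprn_ge0 // ltW.
rewrite ge0_integralD //; first last.
- rewrite (_ : (fun x => _) = (fun x => (k * x^-2)%:E)); last first.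
    by apply/funext => x; rewrite !EFinM.
  apply/mEF; exact: measurable_realfun.measurable_funM.
- by move=> x /f20; rewrite !lee_fin => h; rewrite mulr_ge0.
- rewrite (_ : (fun x => _) = (fun x => ((e/2) * (x^+(n-1)*g x^+2))%:E)); last first.
    by apply/funext => x; rewrite !EFinM.
  apply/mEF; exact: measurable_realfun.measurable_funM.
- by move=> x /f10; rewrite !lee_fin => h; rewrite mulr_ge0.
rewrite ge0_integralZl_EFin //; last exact/mEF.
rewrite ge0_integralZl_EFin //; last exact/mEF.
rewrite int_inv2 // -/k (EFinD (e / 2 * IA)) (EFinM (e / 2)) (EFinM k).
apply: leeD2r; apply: lee_wpmul2l; first by rewrite lee_fin.
apply: le_trans hIA.
apply: ge0_subset_integral => //; first exact/mEF.
by move=> x /hI0 x0; rewrite lee_fin mulr_ge0 ?sqr_ge0 // exprn_ge0.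
Qed.


Lemma good_pt (I : set R) (mI : measurable I) (h : R -> R) (mh : measurable_fun I h)
  (h0 : forall x, I x -> 0 <= h x) (IB : R)
  (hIB : (\int[lebesgue_measure]_(x in I) (h x)%:E <= IB%:E)%E)
  (c d δ : R) : c < d -> `[c, d] `<=` I -> 0 < δ ->
  exists t, (c <= t <= d) /\ h t <= (IB + δ) / (d - c).
Proof.
move=> cd sub d0.
have IB0 : 0 <= IB.
  rewrite -lee_fin; apply: le_trans hIB; apply: integral_ge0 => x Ix.
  by rewrite lee_fin h0.
have dc0 : 0 < d - c by rewrite subr_gt0.
set K := (IB + δ) / (d - c).
have K0 : 0 <= K by rewrite /K divr_ge0 ?(ltW dc0) //; lra.
have [//|nex] := pselect (exists t, (c <= t <= d) /\ h t <= K).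
exfalso.
have H t : c <= t <= d -> K < h t.
  move=> ht; rewrite ltNge; apply/negP => hle; apply: nex; exists t; split => //.
have mJ : measurable `[c, d] by exact: measurable_itv.
have : (\int[lebesgue_measure]_(x in `[c, d]) (K%:E) <=
        \int[lebesgue_measure]_(x in `[c, d]) (h x)%:E)%E.
  apply: ge0_le_integral => //.
  - apply/mEF; exact: measurable_funS mI sub mh.
  - move=> x; rewrite /= in_itv /= => hx; rewrite lee_fin; exact/ltW/H.
have hm : (lebesgue_measure (`[c, d] : set R) = (d - c)%:E)%E by rewrite lebesgue_measure_itv /= lte_fin cd -EFinB.
rewrite integral_cst //.
set mm := (X in (K%:E * X)%E).
have -> : mm = (d - c)%:E by rewrite /mm; rewrite -hm.
rewrite -EFinM.
move=> h1.
have h2 : (\int[lebesgue_measure]_(x in `[c, d]) (h x)%:E <=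
        \int[lebesgue_measure]_(x in I) (h x)%:E)%E.
  by apply: ge0_subset_integral => //; exact/mEF.
have := le_trans h1 (le_trans h2 hIB).
rewrite lee_fin /K mulrVK ?unitfE ?gt_eqF //.
by rewrite gerDl leNgt d0.
Qed.


Lemma fin_int (n : nat) (I : set R) (mI : measurable I) (b : R) (b00 : 0 <= b)
  (hI : forall x, I x -> 0 <= x <= b)
  (g : R -> R) (mg : measurable_fun I g)
  (ig : lebesgue_measure.-integrable I (fun x => (g x ^+ 2)%:E)) :
  (\int[lebesgue_measure]_(x in I) (x ^+ n * g x ^+ 2)%:E =
   (Rintegral lebesgue_measure I (fun x => x ^+ n * g x ^+ 2))%:E)%E.
Proof.
rewrite /Rintegral fineK // ge0_fin_numE; last first.
  apply: integral_ge0 => x /hI /andP[x0 _].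
  by rewrite lee_fin mulr_ge0 ?sqr_ge0 // exprn_ge0.
apply: (@le_lt_trans _ _ (\int[lebesgue_measure]_(x in I) ((b ^+ n)%:E * (g x ^+ 2)%:E))%E).
  apply: ge0_le_integral => //.
  - by move=> x /hI /andP[x0 _]; rewrite lee_fin mulr_ge0 ?sqr_ge0 // exprn_ge0.
  - apply/mEF; apply: measurable_realfun.measurable_funM.
      exact: measurable_realfun.exprn_measurable.
    exact: measurable_realfun.measurable_funX.
  - rewrite (_ : (fun x => _) = (fun x => (b ^+ n * g x ^+ 2)%:E)); last first.
      by apply/funext => x; rewrite EFinM.
    apply/mEF; apply: measurable_realfun.measurable_funM => //.
    exact: measurable_realfun.measurable_funX.
  - move=> x /hI /andP[x0 xb]; rewrite -EFinM lee_fin ler_wpM2r ?sqr_ge0 //.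
    by apply: lerXn2r => //; rewrite nnegrE // (le_trans x0 xb).
have b0 : 0 <= b ^+ n by exact: exprn_ge0.
rewrite ge0_integralZl_EFin //; first last.
- apply/mEF; exact: measurable_realfun.measurable_funX.
- by move=> x _; rewrite lee_fin sqr_ge0.
apply: lte_mul_pinfty => //.
move/integrableP: ig => [_ h]; apply: le_lt_trans h; rewrite le_eqVlt; apply/orP; left; apply/eqP/eq_integral => x _.
by rewrite gee0_abs // lee_fin sqr_ge0.
Qed.


Lemma Dsq (n : nat) (hn : (3 <= n)%N) (I : set R) (mI : measurable I)
  (hI0 : forall x, I x -> 0 <= x) (V g : R -> R) (mg : measurable_fun I g)
  (hF : forall x y, I x -> I y -> x <= y ->
        V y - V x = \int[lebesgue_measure]_(t in `[x, y]) g t)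
  (IA : R)
  (hIA : (\int[lebesgue_measure]_(x in I) (x ^+ (n - 1) * g x ^+ 2)%:E <= IA%:E)%E)
  (m M : R) : 0 < m -> m <= M -> `[m, M] `<=` I -> I m -> I M ->
  m ^+ (n - 2) * (V M - V m) ^+ 2 <= IA.
Proof.
move=> m0 mM sub Im IM.
have IA0 : 0 <= IA.
  rewrite -lee_fin; apply: le_trans hIA; apply: integral_ge0 => x Ix.
  by rewrite lee_fin mulr_ge0 ?sqr_ge0 // exprn_ge0 // hI0.
have [eq|neq] := eqVneq m M.
  by rewrite eq subrr expr0n /= mulr0.
have mM' : m < M by rewrite lt_neqAle neq.
have M0 : 0 < M by exact: lt_trans mM'.
set K := (m ^+ (n - 3))^-1 * (m^-1 - M^-1).
have mn0 : 0 < m ^+ (n - 3) by exact: exprn_gt0.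
have K0 : 0 < K.
  rewrite /K mulr_gt0 ?invr_gt0 // subr_gt0.
  by rewrite ltf_pV2 ?posrE.
have h := @amgm_sq `|V M - V m| IA K (normr_ge0 _) IA0 K0.
have {h} h : `|V M - V m| ^+ 2 <= IA * K.
  apply: h => e e0.
  rewrite (hF m M) //.
  apply: fine_abs_le.
  apply: le_trans; first apply: le_abse_integral.
  - exact: measurable_itv.
  - apply/mEF; exact: measurable_funS mI sub mg.
  rewrite mulrA.
  exact: (@Dint n hn I mI hI0 g mg IA hIA m M e m0 mM' sub e0).
rewrite real_normK ?num_real // in h.
have hm : m ^+ (n - 2) = m ^+ (n - 3) * m.
  by rewrite -exprSr; congr (_ ^+ _); lia.
have hK : m ^+ (n - 2) * K = 1 - m / M.
  by rewrite hm /K; field; rewrite ?gt_eqF.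
apply: (@le_trans _ _ (m ^+ (n - 2) * (IA * K))).
  by rewrite ler_pM2l // exprn_gt0.
rewrite mulrCA hK.
have : 0 <= m / M by rewrite divr_ge0 // ltW.
nra.
Qed.


Lemma pow_sq (s : R) (n : nat) : 0 <= s -> (2 <= n)%N ->
  (s `^ (n%:R / 2 - 1)) ^+ 2 = s ^+ (n - 2).
Proof.
move=> s0 n2.
rewrite -powR_mulrn ?powR_ge0 // -powRrM -powR_mulrn //.
congr (_ `^ _); rewrite natrB // mulrBl divfK ?mul1r // pnatr_eq0.
Qed.

Lemma sqrtD_le (x y : R) : 0 <= x -> 0 <= y ->
  Num.sqrt (x + y) <= Num.sqrt x + Num.sqrt y.
Proof.
move=> x0 y0.
have := @sq_le (Num.sqrt (x + y)) 1 ((Num.sqrt x + Num.sqrt y) ^+ 2).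
rewrite mul1r sqrtr_sqr ger0_norm ?addr_ge0 ?sqrtr_ge0 //.
apply => //.
rewrite expr1n mul1r sqr_sqrtr ?addr_ge0 // sqrrD !sqr_sqrtr //.
have : 0 <= Num.sqrt x * Num.sqrt y *+ 2 by rewrite mulrn_wge0 // mulr_ge0 // sqrtr_ge0.
lra.
Qed.


Lemma H1 (X t L Q : R) : 0 <= X -> 0 < L -> L / 2 <= t -> X * t <= 4 * Q / L ->
  X * L ^+ 2 <= 8 * Q.
Proof.
move=> X0 L0 tL hX.
have hX' : X * t * L <= 4 * Q by rewrite -ler_pdivlMr.
have h1 : 0 <= X * L by rewrite mulr_ge0 // ltW.
have h2 : 0 <= t - L / 2 by rewrite subr_ge0.
have := mulr_ge0 h1 h2.
rewrite expr2; nra.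
Qed.

Lemma H2 (S X c2 kk L Q : R) : 0 <= X -> 0 < L -> 0 <= Q -> S <= c2 * X -> 0 <= c2 ->
  c2 * 8 <= kk -> X * L ^+ 2 <= 8 * Q -> S <= kk / L ^+ 2 * Q.
Proof.
move=> X0 L0 Q0 hS c0 hc hX.
have L2 : 0 < L ^+ 2 by rewrite exprn_gt0.
rewrite mulrAC ler_pdivlMr //.
apply: (@le_trans _ _ (c2 * X * L ^+ 2)).
  by rewrite ler_pM2r.
rewrite -mulrA.
apply: (@le_trans _ _ (c2 * (8 * Q))); first by rewrite ler_wpM2l.
by rewrite mulrA ler_wpM2r.
Qed.

End S.
Theorem lemma3p6 (R : realType) (n : nat) (hn : (3 <= n)%N) :
  exists C : R,
  forall (a b : R) (ba bb : bool) (V V' : R -> R),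
    a < b ->
    [set` Interval (BSide ba a) (BSide bb b)] `<=` `]0, +oo[ ->
    H1_on [set` Interval (BSide ba a) (BSide bb b)] V V' ->
    forall s : R, s \in Interval (BSide ba a) (BSide bb b) ->
      s `^ (n%:R / 2 - 1) * `|V s| <=
      C * (Num.sqrt (\int[lebesgue_measure]_(t in [set` Interval (BSide ba a) (BSide bb b)])
                       (t ^+ (n - 1) * V' t ^+ 2))
           + (b - a)^-1 *
             Num.sqrt (\int[lebesgue_measure]_(t in [set` Interval (BSide ba a) (BSide bb b)])
                       (t ^+ (n - 1) * V t ^+ 2))).
Proof.
exists (2 ^+ n).
move=> a b ba bb V V' ab Isub [mV iV mV' iV' hF] s hs.
set Itv := Interval (BSide ba a) (BSide bb b).
have mI : measurable [set` Itv] := measurable_itv Itv.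
have Ipos x : x \in Itv -> 0 < x.
  by move=> hx; have := Isub x hx; rewrite /= in_itv /= andbT.
have Iab x : x \in Itv -> a <= x /\ x <= b by exact: itv_bnds.
have a0 : 0 <= a.
  rewrite leNgt; apply/negP => a_neg.
  case: (leP b 0) => [b0|b0].
    have h1 : a < (a + b) / 2 by lra.
    have h2 : (a + b) / 2 < b by lra.
    have := Ipos _ (@itv_open _ ba bb a b _ h1 h2).
    by move=> h; lra.
  have h1 : a < a / 2 by lra.
  have h2 : a / 2 < b by lra.
  have := Ipos _ (@itv_open _ ba bb a b _ h1 h2).
  by move=> h; lra.
have b0 : 0 <= b by lra.
have hI0 x : [set` Itv] x -> 0 <= x by move=> /Ipos/ltW.
have hIb x : [set` Itv] x -> 0 <= x <= b.
  by move=> hx; rewrite hI0 //=; case: (Iab x hx).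
have hIA := @fin_int R (n - 1) _ mI b b0 hIb V' mV' iV'.
have hIB := @fin_int R (n - 1) _ mI b b0 hIb V mV iV.
set IA := (\int[lebesgue_measure]_(x in [set` Itv]) (x ^+ (n - 1) * V' x ^+ 2)) in hIA *.
set IB := (\int[lebesgue_measure]_(x in [set` Itv]) (x ^+ (n - 1) * V x ^+ 2)) in hIB *.
have hIA' : (\int[lebesgue_measure]_(x in [set` Itv]) (x ^+ (n - 1) * V' x ^+ 2)%:E <= IA%:E)%E.
  by rewrite hIA.
have hIB' : (\int[lebesgue_measure]_(x in [set` Itv]) (x ^+ (n - 1) * V x ^+ 2)%:E <= IB%:E)%E.
  by rewrite hIB.
have IA0 : 0 <= IA.
  rewrite -lee_fin -hIA; apply: integral_ge0 => x Ix.
  by rewrite lee_fin mulr_ge0 ?sqr_ge0 // exprn_ge0 // hI0.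
have IB0 : 0 <= IB.
  rewrite -lee_fin -hIB; apply: integral_ge0 => x Ix.
  by rewrite lee_fin mulr_ge0 ?sqr_ge0 // exprn_ge0 // hI0.
have subI m M : m \in Itv -> M \in Itv -> `[m, M] `<=` [set` Itv].
  move=> hm hM x /=; rewrite in_itv /= => /andP[h1 h2].
  exact: (@itv_conv _ ba bb a b m M x hm hM h1 h2).
have DS m M : m \in Itv -> M \in Itv -> m <= M ->
    m ^+ (n - 2) * (V M - V m) ^+ 2 <= IA.
  move=> hm hM mM.
  exact: (@Dsq R n hn _ mI hI0 V V' mV' hF IA hIA' m M (Ipos _ hm) mM (subI _ _ hm hM) hm hM).
pose c := (a + b) / 2.
pose d := (a + 3 * b) / 4.
have cd : c < d by rewrite /c /d; lra.
have hc : c \in Itv by apply: itv_open; rewrite /c; lra.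
have hd : d \in Itv by apply: itv_open; rewrite /d; lra.
have mh : measurable_fun [set` Itv] (fun x => x ^+ (n - 1) * V x ^+ 2).
  apply: measurable_realfun.measurable_funM.
    exact: measurable_realfun.exprn_measurable.
  exact: measurable_realfun.measurable_funX.
have h0 x : [set` Itv] x -> 0 <= x ^+ (n - 1) * V x ^+ 2.
  by move=> Ix; rewrite mulr_ge0 ?sqr_ge0 // exprn_ge0 // hI0.
set k : R := 2 ^+ n.
have k0 : 0 < k by rewrite /k exprn_gt0.
set L := b - a.
have L0 : 0 < L by rewrite /L subr_gt0.
apply/ler_addgt0Pr => eps eps0.
pose δ := (eps * L / k) ^+ 2.
have δ0 : 0 < δ by rewrite /δ exprn_gt0 // divr_gt0 // mulr_gt0.
have [t [ht hVt]] := @good_pt R _ mI _ mh h0 IB hIB' c d δ cd (subI _ _ hc hd) δ0.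
have htI : t \in Itv.
  by case/andP: ht => h1 h2; exact: (@itv_conv _ ba bb a b c d t hc hd h1 h2).
have t0 : 0 < t := Ipos _ htI.
have s0 : 0 < s := Ipos _ hs.
have [_ sb] := Iab _ hs.
have [tc td] : c <= t /\ t <= d by case/andP: ht.
have s2t : s <= 2 * t by rewrite /c in tc; lra.
have tL : L / 2 <= t by rewrite /c /L in tc *; lra.
have dc : d - c = L / 4 by rewrite /d /c /L; field.
set p := s `^ (n%:R / 2 - 1).
have p0 : 0 <= p by exact: powR_ge0.
have p2 : p ^+ 2 = s ^+ (n - 2) by rewrite /p pow_sq // ?(ltW s0) // ltnW.
have k2 : k ^+ 2 = 2 ^+ (n + n) by rewrite /k exprD expr2.
have e1 : 2 ^+ (n - 2) * 8 <= k ^+ 2.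
  have hh : (n - 2 + 3 <= n + n)%N by clear -hn; lia.
  have h8 : (8 : R) = 2 ^+ 3 by rewrite -natrX.
  by rewrite k2 h8 -exprD; apply: (ler_weXn2l _ hh); rewrite ler1n.
have e2 : 2 ^+ (n - 2) <= k ^+ 2.
  have hh : (n - 2 <= n + n)%N by clear -hn; lia.
  by rewrite k2; apply: (ler_weXn2l _ hh); rewrite ler1n.
have e3 : 1 <= k ^+ 2 by rewrite k2; apply: exprn_ege1; rewrite ler1n.
have st : s ^+ (n - 2) <= 2 ^+ (n - 2) * t ^+ (n - 2).
  rewrite -exprMn; apply: lerXn2r => //; rewrite nnegrE ?ltW //.
  by rewrite mulr_gt0.
have tn : t ^+ (n - 1) = t ^+ (n - 2) * t.
  have hh : (n - 1 = (n - 2).+1)%N by clear -hn; lia.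
  by rewrite -exprSr hh.
have tri : `|V s| <= `|V t| + `|V s - V t|.
  by have := ler_normD (V t) (V s - V t); rewrite addrC subrK.
have T1 : p * `|V t| <= k * L^-1 * Num.sqrt (IB + δ).
  have Q0 : 0 <= IB + δ by rewrite addr_ge0 // ltW.
  apply: sq_le => //.
  - by rewrite mulr_ge0.
  - exact: divr_ge0 (ltW k0) (ltW L0).
  rewrite exprMn p2 real_normK ?num_real //.
  rewrite exprMn exprVn.
  set X := t ^+ (n - 2) * V t ^+ 2.
  have X0 : 0 <= X by rewrite /X mulr_ge0 ?sqr_ge0 // exprn_ge0 // ltW.
  have hX : X * t <= 4 * (IB + δ) / L.
    move: hVt; rewrite tn dc /X.
    have -> : t ^+ (n - 2) * t * V t ^+ 2 = t ^+ (n - 2) * V t ^+ 2 * t by ring.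
    have -> : (IB + δ) / (L / 4) = 4 * (IB + δ) / L by field; rewrite gt_eqF.
    by [].
  have hX2 := @H1 R X t L _ X0 L0 tL hX.
  apply: (@H2 R _ X _ _ L _ X0 L0 Q0 _ _ e1 hX2); last by rewrite exprn_ge0.
  by have := ler_wpM2r (sqr_ge0 (V t)) st; rewrite -mulrA.
have T2 : p * `|V s - V t| <= k * Num.sqrt IA.
  apply: sq_le => //.
  - by rewrite mulr_ge0.
  - exact: ltW.
  rewrite exprMn p2 real_normK ?num_real //.
  have [st'|ts] := leP s t.
    have := DS s t hs htI st'.
    rewrite -opprB sqrrN => h.
    apply: (le_trans h).
    by rewrite -{1}(mul1r IA) ler_wpM2r.
  have := DS t s htI hs (ltW ts) => h.
  apply: (@le_trans _ _ (2 ^+ (n - 2) * IA)); last by rewrite ler_wpM2r.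
  apply: (@le_trans _ _ (2 ^+ (n - 2) * (t ^+ (n - 2) * (V s - V t) ^+ 2))).
    by have := ler_wpM2r (sqr_ge0 (V s - V t)) st; rewrite -mulrA.
  by rewrite ler_wpM2l // exprn_ge0.
have T3 : Num.sqrt (IB + δ) <= Num.sqrt IB + eps * L / k.
  apply: (le_trans (@sqrtD_le R _ _ IB0 (ltW δ0))).
  rewrite /δ sqrtr_sqr ger0_norm //.
  by rewrite divr_ge0 ?mulr_ge0 // ltW.
have kL0 : 0 <= k * L^-1 by exact: divr_ge0 (ltW k0) (ltW L0).
have F : k * L^-1 * (Num.sqrt IB + eps * L / k) + k * Num.sqrt IA =
         k * (Num.sqrt IA + L^-1 * Num.sqrt IB) + eps.
  by field; rewrite !gt_eqF.
rewrite -F.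
apply: (@le_trans _ _ (p * `|V t| + p * `|V s - V t|)).
  by rewrite -mulrDr ler_wpM2l.
apply: lerD => //.
apply: (le_trans T1).
by rewrite ler_wpM2l.
Qed.
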